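(* Let $\mathcal X$ be a finite set and let $\mathcal C$ be a set of probability measures on $(\mathcal X^\infty,\mathcal F)$. Suppose there is a probability measure $\rho$ on $(\mathcal X^\infty,\mathcal F)$ such that $\rho$ predicts every $\mu\in\mathcal C$ in expected average KL divergence. Then there exist a sequence $\mu_k\in\mathcal C$, $k\in\mathbb N$, and positive weights $w_k$, $k\in\mathbb N$, such that the measure $\nu:=\sum_{k\in\mathbb N} w_k\mu_k$ predicts every $\mu\in\mathcal C$ in expected average KL divergence.
   Context: $\mathcal X^\infty$ is the set of one-way infinite sequences $x_1,x_2,\dots$ with $x_i\in\mathcal X$, and $\mathcal F$ is the sigma-field generated by the cylinder sets $[x_{1..n}]$ (all infinite sequences starting with $x_1,\dots,x_n$), $n\in\mathbb N$. For probability measures $\mu,\rho$ the expected cumulative Kullback–Leibler divergence is $d_n(\mu,\rho):=\mathbf E_\mu\sum_{t=1}^n\sum_{a\in\mathcal X}\mu(x_t=a\mid x_{1..t-1})\log\frac{\mu(x_t=a\mid x_{1..t-1})}{\rho(x_t=a\mid x_{1..t-1})}$, equivalently $d_n(\mu,\rho)=-\sum_{x_{1..n}\in\mathcal X^n}\mu(x_{1..n})\log\frac{\rho(x_{1..n})}{\mu(x_{1..n})}$, where $\mu(x_{1..n})$ denotes the $\mu$-probability of the cylinder $[x_{1..n}]$. We say $\rho$ predicts $\mu$ in expected average KL divergence if $\frac1n d_n(\mu,\rho)\to 0$ as $n\to\infty$. *)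

(* Defs.v *)
From HB Require Import structures.
From mathcomp Require Import all_boot all_order all_algebra.
From mathcomp Require Import all_classical all_reals all_analysis.
Set Implicit Arguments. Unset Strict Implicit. Unset Printing Implicit Defensive.
Import Order.TTheory GRing.Theory Num.Theory.
Local Open Scope classical_set_scope.
Local Open Scope ring_scope.

(* The space X^oo of one-way infinite sequences over the finite alphabet X
   (indices start at 0: x_1 of the paper is [x 0]).  A point x0 : X is
   needed only because MathComp-Analysis measurable types are pointed. *)
Definition seqs (X : finType) (x0 : X) := nat -> X.
HB.instance Definition _ (X : finType) (x0 : X) := Choice.on (seqs x0).
HB.instance Definition _ (X : finType) (x0 : X) :=
  isPointed.Build (seqs x0) (fun _ => x0).
Arguments seqs {X} x0.

Definition cylinder (X : finType) (x0 : X) (n : nat) (w : {ffun 'I_n -> X})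
  : set (seqs x0) := [set x | forall i : 'I_n, x i = w i].
Arguments cylinder {X} x0 {n} w.

Definition cylinders (X : finType) (x0 : X) : set (set (seqs x0)) :=
  [set A | exists n (w : {ffun 'I_n -> X}), A = cylinder x0 w].
Arguments cylinders {X} x0.

Definition Xinf (X : finType) (x0 : X) := g_sigma_algebraType (cylinders x0).
Arguments Xinf {X} x0.

Definition kl_term (R : realType) (a b : R) : \bar R :=
  if a == 0 then 0%E else if b == 0 then +oo%E else (a * ln (a / b))%:E.

Definition kl_div (R : realType) (X : finType) (x0 : X)
  (mu rho : probability (Xinf x0) R) (n : nat) : \bar R :=
  (\sum_(w : {ffun 'I_n -> X})
     kl_term (fine (mu (cylinder x0 w : set (Xinf x0))))
             (fine (rho (cylinder x0 w : set (Xinf x0)))))%E.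

Definition predicts (R : realType) (X : finType) (x0 : X)
  (rho mu : probability (Xinf x0) R) : Prop :=
  ((fun n : nat => ((n%:R)^-1)%:E * kl_div mu rho n) @ \oo --> 0%E)%E.

(* Main.v *)
Require Import Defs.
From HB Require Import structures.
From mathcomp Require Import all_boot all_order all_algebra.
From mathcomp Require Import all_classical all_reals all_analysis.
From mathcomp Require Import ring lra zify.
Import Order.TTheory GRing.Theory Num.Theory.
Local Open Scope classical_set_scope.
Local Open Scope ring_scope.

Section M.
Context (R : realType) (X : finType) (x0 : X).
Local Notation T := (Xinf x0).

Lemma cyl_meas n (w : {ffun 'I_n -> X}) : measurable (cylinder x0 w : set T).
Proof. apply: sub_gen_smallest. by exists n, w. Qed.

Lemma cyl_sum (P : probability T R) n :
  (\sum_(w : {ffun 'I_n -> X}) P (cylinder x0 w : set T))%E = 1%E.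
Proof.
have -> : (\sum_(w : {ffun 'I_n -> X}) P (cylinder x0 w : set T))%E =
   P (\bigcup_(w in [set: {ffun 'I_n -> X}]) (cylinder x0 w : set T)).
  rewrite measure_fin_bigcup //.
  - rewrite (fsbigE (enum {ffun 'I_n -> X})) ?enum_uniq //.
      by rewrite big_enum_cond /=; apply: eq_bigl => w; rewrite in_setT.
    by move=> w; rewrite mem_enum.
  - exact: finite_finset.
  - move=> w1 w2 _ _ [x [/= h1 h2]]; apply/ffunP => i; by rewrite -h1 -h2.
  - by move=> w _; exact: cyl_meas.
rewrite -[X in _ = X](@probability_setT _ T R P); congr (P _).
apply/seteqP; split => // x _; exists [ffun i => x (nat_of_ord i)] => //.
by move=> i; rewrite ffunE.
Qed.
End M.

Section KL.
Context (R : realType).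

Lemma ln_le_sub1 (y : R) : 0 < y -> ln y <= y - 1.
Proof.
move=> y0; have e : 1 + (y - 1) = y by rewrite addrC subrK.
have := @le_ln1Dx R (y - 1); rewrite e; apply.
lra.
Qed.

Lemma kl_term_lb (a b : R) : 0 <= a -> 0 <= b -> ((a - b)%:E <= kl_term a b)%E.
Proof.
move=> a0 b0; rewrite /kl_term; case: eqP => [->|/eqP an0].
  by rewrite lee_fin sub0r oppr_le0.
case: eqP => [_|/eqP bn0]; first exact: leey.
have ap : 0 < a by rewrite lt_def an0.
have bp : 0 < b by rewrite lt_def bn0.
rewrite lee_fin.
have h := @ln_le_sub1 (b / a) (divr_gt0 bp ap).
have e : ln (a / b) = - ln (b / a).
  by rewrite -lnV ?posrE ?divr_gt0 // invf_div.
rewrite e mulrN.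
have : a * ln (b / a) <= a * (b / a - 1) by rewrite ler_wpM2l // ltW.
rewrite mulrBr mulr1 mulrCA divff ?mulr1 //.
by move=> h2; rewrite lerNr opprB.
Qed.

Lemma kl_term_lb2 (a b c : R) : 0 < a -> 0 <= b -> 1 <= c -> c * b < a ->
  ((a * ln c - b)%:E <= kl_term a b)%E.
Proof.
move=> ap b0 c1 cba; rewrite /kl_term gt_eqF //.
case: eqP => [_|/eqP bn0]; first exact: leey.
have bp : 0 < b by rewrite lt_def bn0.
rewrite lee_fin.
have c0 : 0 < c by apply: lt_le_trans c1.
have : a * ln c <= a * ln (a / b).
  apply: ler_wpM2l; first exact: ltW.
  rewrite ler_ln ?posrE ?divr_gt0 //.
  by rewrite ler_pdivlMr // ltW.
lra.
Qed.

Lemma kl_term_ub (a b M : R) : 0 < a -> 0 < b -> a <= M * b ->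
  (kl_term a b <= (a * ln M)%:E)%E.
Proof.
move=> ap bp aMb; rewrite /kl_term gt_eqF // gt_eqF // lee_fin.
have M0 : 0 < M by move: (lt_le_trans ap aMb); rewrite pmulr_lgt0.
apply: ler_wpM2l; first exact: ltW.
by rewrite ler_ln ?posrE ?divr_gt0 // ler_pdivrMr.
Qed.

Variable T : finType.

Lemma gibbs (p q : T -> R) : (forall y, 0 <= p y) -> (forall y, 0 <= q y) ->
  \sum_y q y <= \sum_y p y -> (0 <= \sum_y kl_term (p y) (q y))%E.
Proof.
move=> p0 q0 qp.
have h : (\sum_y (p y - q y)%:E <= \sum_y kl_term (p y) (q y))%E.
  by apply: lee_sum => y _; apply: kl_term_lb.
apply: le_trans h.
by rewrite sumEFin lee_fin sumrB subr_ge0.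
Qed.

Lemma markov_kl (p q : T -> R) (c K : R) :
  (forall y, 0 <= p y) -> (forall y, 0 <= q y) -> \sum_y q y <= 1 -> 1 <= c ->
  (\sum_y kl_term (p y) (q y) <= K%:E)%E ->
  (\sum_(y | (0 < p y) && (c * q y < p y)) p y) * ln c <= K + 1.
Proof.
move=> p0 q0 q1 c1 hK.
have h : (\sum_y ((if (0 < p y) && (c * q y < p y) then p y * ln c else 0) - q y)%:E
   <= \sum_y kl_term (p y) (q y))%E.
  apply: lee_sum => y _; case: ifPn => [/andP[py cq]|_].
    exact: kl_term_lb2.
  rewrite sub0r; apply: (le_trans _ (@kl_term_lb (p y) (q y) (p0 y) (q0 y))).
  by have := p0 y; rewrite lee_fin; lra.
have := le_trans h hK; rewrite sumEFin lee_fin sumrB -big_mkcond /= -mulr_suml.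
move=> h2; apply: le_trans (lerD h2 q1); by rewrite subrK.
Qed.

Lemma kl_sum_ub (p q : T -> R) (M : T -> R) :
  (forall y, 0 <= p y) ->
  (forall y, 0 < p y -> 0 < q y /\ p y <= M y * q y) ->
  (\sum_y kl_term (p y) (q y) <= (\sum_y p y * ln (M y))%:E)%E.
Proof.
move=> p0 h; rewrite -sumEFin; apply: lee_sum => y _.
have [py|] := ltP 0 (p y).
  by have [qy pM] := h y py; apply: kl_term_ub.
move=> py; have -> : p y = 0 by apply/le_anti; rewrite py p0.
by rewrite /kl_term eqxx mul0r.
Qed.

End KL.

Section Greedy.
Context (R : realType) (T : finType) (A : Type).

Definition cov (D : A -> pred T) (f : nat -> A) (m : nat) (y : T) : bool :=
  has (fun i => D (f i) y) (iota 0 m).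

Lemma sum_sub_le (r : T -> R) (Q : pred T) : (forall y, 0 <= r y) ->
  \sum_(y | Q y) r y <= \sum_y r y.
Proof.
move=> r0; rewrite [X in _ <= X](bigID Q) /= lerDl.
by apply: sumr_ge0 => y _.
Qed.

Lemma greedy (a0 : A) (r : T -> R) (P : A -> Prop) (D : A -> pred T)
    (pm : A -> T -> R) (c th : R) :
  (forall y, 0 <= r y) -> \sum_y r y <= 1 -> 0 < th -> 0 < c ->
  (forall a y, P a -> D a y -> pm a y <= c * r y) ->
  exists (m : nat) (f : nat -> A), (forall i, (i < m)%N -> P (f i)) /\
    m%:R <= c / th + 1 /\
    forall a, P a -> \sum_(y | D a y && ~~ cov D f m y) pm a y < th.
Proof.
move=> r0 r1 th0 c0 hD.
have claim : forall N, (exists (m : nat) (f : nat -> A), (m <= N)%N /\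
    (forall i, (i < m)%N -> P (f i)) /\
    forall a, P a -> \sum_(y | D a y && ~~ cov D f m y) pm a y < th) \/
  (exists f : nat -> A, (forall i, (i < N)%N -> P (f i)) /\
    N%:R * (th / c) <= \sum_(y | cov D f N y) r y).
  elim=> [|N IH].
    right; exists (fun=> a0); split => // .
    by rewrite mul0r; apply: sumr_ge0.
  case: IH => [[m [f [mN [hP hc]]]]|[f [hP hs]]].
    by left; exists m, f; split => //; apply: leqW.
  case: (pselect (forall a, P a -> \sum_(y | D a y && ~~ cov D f N y) pm a y < th)).
    by move=> hc; left; exists N, f; split.
  move=> hn.
  have [a [Pa ha]] : exists a, P a /\ th <= \sum_(y | D a y && ~~ cov D f N y) pm a y.
    apply: contrapT => H; apply: hn => a Pa; rewrite ltNge; apply/negP => ha.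
    by apply: H; exists a.
  right; exists (fun i => if i == N then a else f i); split.
    move=> i; rewrite ltnS leq_eqVlt; case: eqP => [_ _|_ /= iN]; first by [].
    exact: hP.
  have ecov : forall y, cov D (fun i => if i == N then a else f i) N.+1 y =
      cov D f N y || D a y.
    move=> y; rewrite /cov -addn1 iotaD has_cat /= add0n eqxx orbF.
    congr (_ || _); apply: eq_in_has => i; rewrite mem_iota add0n => /andP[_ iN].
    by rewrite ltn_eqF.
  rewrite (eq_bigl _ _ ecov).
  rewrite (bigID (cov D f N)) /=.
  have -> : \sum_(i | (cov D f N i || D a i) && cov D f N i) r i =
            \sum_(i | cov D f N i) r i.
    by apply: eq_bigl => y; case: (cov D f N y); rewrite ?andbT ?andbF.
  have -> : \sum_(i | (cov D f N i || D a i) && ~~ cov D f N i) r i =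
            \sum_(i | D a i && ~~ cov D f N i) r i.
    by apply: eq_bigl => y; case: (cov D f N y); rewrite ?andbT ?andbF ?orbF.
  have h2 : th / c <= \sum_(i | D a i && ~~ cov D f N i) r i.
    have : \sum_(y | D a y && ~~ cov D f N y) pm a y <=
           \sum_(y | D a y && ~~ cov D f N y) (c * r y).
      by apply: ler_sum => y /andP[Dy _]; apply: hD.
    rewrite -mulr_sumr => h3.
    rewrite ler_pdivrMr // mulrC; exact: le_trans ha h3.
  by rewrite -natr1 mulrDl mul1r; apply: lerD.
pose N := (Num.truncn (c / th)).+1.
have hN : 1 < N%:R * (th / c).
  rewrite -ltr_pdivrMr ?divr_gt0 // mul1r invf_div; exact: truncnS_gt.
case: (claim N) => [[m [f [mN [hP hc]]]]|[f [_ hs]]]; last first.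
  have := le_trans hs (@sum_sub_le r _ r0); move: hN r1; lra.
exists m, f; split => //; split => //.
apply: le_trans (_ : N%:R <= _); first by rewrite ler_nat.
rewrite /N -natr1 lerD2r truncn_le; apply: ltW; exact: divr_gt0.
Qed.

Lemma crude (P : A -> Prop) (pm : A -> T -> R) (a0 : A) : P a0 ->
  (forall a y, 0 <= pm a y <= 1) ->
  exists g : T -> A, forall y, P (g y) /\ forall a, P a -> pm a y <= 2 * pm (g y) y.
Proof.
move=> Pa0 hb.
suff : forall y, exists b, P b /\ forall a, P a -> pm a y <= 2 * pm b y.
  by move=> /choice [g hg]; exists g.
move=> y.
pose E := [set pm a y | a in P].
have hs : has_sup E.
  split; first by exists (pm a0 y), a0.
  by exists 1 => _ [a _ <-]; have /andP[] := hb a y.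
have ub := sup_upper_bound hs.
have [s0|spos] := leP (sup E) 0.
  exists a0; split => // a Pa.
  have h1 : pm a y <= sup E by apply: ub; exists a.
  have := hb a0 y; move/andP => [h0 _]; lra.
have [e [b Pb <-] he] := sup_adherent (divr_gt0 spos (ltr0Sn R 1)) hs.
exists b; split => // a Pa.
have h1 : pm a y <= sup E by apply: ub; exists a.
lra.
Qed.

End Greedy.

Section Mix.
Context (R : realType) (X : finType) (x0 : X).
Local Notation T := (Xinf x0).

Definition pw (P : probability T R) n (w : {ffun 'I_n -> X}) : R :=
  fine (P (cylinder x0 w : set T)).

Lemma pwE (P : probability T R) n w : P (cylinder x0 w : set T) = (@pw P n w)%:E.
Proof.
rewrite /pw fineK // ge0_fin_numE //.
by apply: (le_lt_trans (probability_le1 _ (@cyl_meas X x0 n w))); rewrite ltey.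
Qed.

Lemma pw_ge0 (P : probability T R) n w : 0 <= @pw P n w.
Proof. by rewrite -lee_fin -pwE. Qed.

Lemma pw_le1 (P : probability T R) n w : @pw P n w <= 1.
Proof. by rewrite -lee_fin -pwE; apply: probability_le1; exact: (@cyl_meas X x0). Qed.

Lemma pw_sum (P : probability T R) n : \sum_(w : {ffun 'I_n -> X}) @pw P n w = 1.
Proof.
apply/eqP; rewrite -eqe -sumEFin; apply/eqP.
rewrite -(@cyl_sum R X x0 P n); apply: eq_bigr => w _; by rewrite pwE.
Qed.

Definition vw (k : nat) : R := ((k.+1 * k.+2)%:R)^-1.

Lemma vw_gt0 k : 0 < vw k.
Proof. by rewrite /vw invr_gt0 ltr0n muln_gt0. Qed.

Lemma vw_sum N : \sum_(0 <= k < N) vw k = 1 - (N.+1%:R)^-1.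
Proof.
elim: N => [|N IH]; first by rewrite big_geq // invr1 subrr.
rewrite big_nat_recr //= IH /vw natrM.
have h1 : (N.+1%:R : R) != 0 by rewrite pnatr_eq0.
have h2 : (N.+2%:R : R) != 0 by rewrite pnatr_eq0.
rewrite -[N.+2]addn1 natrD -[N.+1]addn1 natrD.
rewrite -[N.+1]addn1 natrD in h1. rewrite -[N.+2]addn1 -[N.+1]addn1 !natrD in h2.
field.
by rewrite h1 h2.
Qed.

Lemma vw_sum_le1 N : \sum_(0 <= k < N) vw k <= 1.
Proof. rewrite vw_sum lerBlDr lerDl invr_ge0; exact: ler0n. Qed.

Section PM.
Variables (mu : {measure set T -> \bar R}) (h1 : mu setT = 1%E).
Definition pmeas (A : set T) := let _ := h1 in mu A.
Let pm0 : pmeas set0 = 0%E. Proof. exact: measure0. Qed.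
Let pm_ge0 A : (0 <= pmeas A)%E. Proof. exact: measure_ge0. Qed.
Let pm_sa : semi_sigma_additive pmeas. Proof. exact: measure_semi_sigma_additive. Qed.
HB.instance Definition _ := isMeasure.Build _ _ _ pmeas pm0 pm_ge0 pm_sa.
HB.instance Definition _ := Measure_isProbability.Build _ _ _ pmeas h1.
End PM.

Lemma mixture (mus : nat -> probability T R) : exists (w : nat -> R) (nu : probability T R),
  (forall k, vw k <= w k) /\
  (forall A, measurable A -> nu A = (\sum_(0 <= k <oo) ((w k)%:E * mus k A))%E).
Proof.
have ev_le1 : ((\sum_(0 <= k <oo) (vw k)%:E) <= 1)%E.
  apply: lime_le.
    by apply: is_cvg_nneseries => k _; rewrite lee_fin ltW // vw_gt0.
  by apply: nearW => N; rewrite sumEFin lee_fin vw_sum_le1.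
have ev_ge : ((vw 0)%:E <= \sum_(0 <= k <oo) (vw k)%:E)%E.
  have := @nneseries_lim_ge R (fun k => (vw k)%:E) xpredT 0 1.
  rewrite big_nat1; apply.
  by move=> k _ _; rewrite lee_fin ltW // vw_gt0.
have ev0 : (0 <= \sum_(0 <= k <oo) (vw k)%:E)%E.
  by apply: (le_trans _ ev_ge); rewrite lee_fin ltW // vw_gt0.
have evfin : (\sum_(0 <= k <oo) (vw k)%:E)%E \is a fin_num.
  by rewrite ge0_fin_numE // (le_lt_trans ev_le1 (ltey _)).
set S := fine (\sum_(0 <= k <oo) (vw k)%:E)%E.
have SE : (\sum_(0 <= k <oo) (vw k)%:E)%E = S%:E by rewrite /S fineK.
have S0 : 0 < S.
  by rewrite -lte_fin -SE; apply: (lt_le_trans _ ev_ge); rewrite lte_fin vw_gt0.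
have S1 : S <= 1 by rewrite -lee_fin -SE.
pose w k := vw k / S.
have w0 k : 0 <= w k by rewrite /w divr_ge0 // ltW // vw_gt0.
pose wnn k := NngNum (w0 k).
pose mix := mseries (fun k => mscale (wnn k) (mus k)) 0.
have mixE A : mix A = (\sum_(0 <= k <oo) ((w k)%:E * mus k A))%E by [].
have mix1 : mix setT = 1%E.
  rewrite mixE.
  transitivity (\sum_(0 <= k <oo) ((S^-1)%:E * (vw k)%:E))%E.
    by apply: eq_eseriesr => k _; rewrite probability_setT mule1 /w mulrC EFinM.
  rewrite nneseriesZl; last by move=> k _; rewrite lee_fin ltW // vw_gt0.
  by rewrite SE -EFinM mulVf // gt_eqF.
exists w, (@pmeas mix mix1); split.
  by move=> k; rewrite /w ler_pdivlMr //; have := vw_gt0 k; nra.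
by move=> A mA; rewrite /pmeas.
Qed.

Lemma mix_ge (nu : probability T R) (w : nat -> R) (mus : nat -> probability T R) :
  (forall k, 0 <= w k) ->
  (forall A, measurable A -> nu A = (\sum_(0 <= k <oo) ((w k)%:E * mus k A))%E) ->
  forall j n y, w j * @pw (mus j) n y <= @pw nu n y.
Proof.
move=> w0 hnu j n y; rewrite -lee_fin EFinM -!pwE hnu; last exact: (@cyl_meas X x0).
have := @nneseries_lim_ge R (fun k => ((w k)%:E * mus k (cylinder x0 y : set T))%E) xpredT 0 j.+1.
move=> H; apply: (le_trans _ (H _)).
  2: by move=> k _ _; apply: mule_ge0; [rewrite lee_fin | exact: measure_ge0].
rewrite big_nat_recr //= leeDr //.
by apply: sume_ge0 => k _; apply: mule_ge0; [rewrite lee_fin | exact: measure_ge0].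
Qed.

End Mix.

Section Est.
Context (R : realType) (T : finType).

Lemma est (p q : T -> R) (G : pred T) (MG MB d : R) :
  (forall y, 0 <= p y) -> \sum_y p y = 1 -> 1 <= MG -> 1 <= MB ->
  \sum_(y | ~~ G y) p y <= d ->
  (forall y, 0 < p y -> 0 < q y /\ p y <= (if G y then MG else MB) * q y) ->
  (\sum_y kl_term (p y) (q y) <= (ln MG + d * ln MB)%:E)%E.
Proof.
move=> p0 p1 MG1 MB1 hd h.
apply: (le_trans (@kl_sum_ub R T p q (fun y => if G y then MG else MB) p0 h)); rewrite lee_fin.
rewrite (bigID G) /=.
have -> : \sum_(i | G i) p i * ln (if G i then MG else MB) = ln MG * \sum_(i | G i) p i.
  by rewrite mulr_sumr; apply: eq_bigr => i ->; rewrite mulrC.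
have -> : \sum_(i | ~~ G i) p i * ln (if G i then MG else MB) =
          ln MB * \sum_(i | ~~ G i) p i.
  by rewrite mulr_sumr; apply: eq_bigr => i /negbTE ->; rewrite mulrC.
have lG := ln_ge0 MG1; have lB := ln_ge0 MB1.
have sG : \sum_(i | G i) p i <= 1 by rewrite -p1; exact: sum_sub_le.
have sB : 0 <= \sum_(i | ~~ G i) p i by apply: sumr_ge0.
apply: lerD.
  by rewrite -[X in _ <= X]mulr1; apply: ler_wpM2l.
by rewrite mulrC; apply: ler_wpM2r.
Qed.

Lemma bad_mass (p r : T -> R) (c K : R) :
  (forall y, 0 <= p y) -> (forall y, 0 <= r y) -> \sum_y r y <= 1 -> 1 < c ->
  (\sum_y kl_term (p y) (r y) <= K%:E)%E ->
  \sum_(y | ~~ ((0 < p y) && (p y <= c * r y) && (r y <= c * p y))) p y <=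
    (K + 1) / ln c + c^-1.
Proof.
move=> p0 r0 r1 c1 hK.
have c0 : 0 < c by lra.
have lc : 0 < ln c by apply: ln_gt0.
have m := @markov_kl R T p r c K p0 r0 r1 (ltW c1) hK.
have h1 : \sum_(y | (0 < p y) && (c * r y < p y)) p y <= (K + 1) / ln c.
  by rewrite ler_pdivlMr.
have h2 : \sum_(y | (0 < p y) && (c * p y < r y)) p y <= c^-1.
  apply: (@le_trans _ _ (\sum_(y | (0 < p y) && (c * p y < r y)) (c^-1 * r y))).
    apply: ler_sum => y /andP[_ h]; rewrite ler_pdivlMl //; exact: ltW.
  rewrite -mulr_sumr -[X in _ <= X]mulr1; apply: ler_wpM2l; first by rewrite invr_ge0 ltW.
  apply: le_trans r1; exact: sum_sub_le.
apply: le_trans (lerD h1 h2).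
rewrite [X in _ <= X + _]big_mkcond [X in _ <= _ + X]big_mkcond -big_split /=.
rewrite big_mkcond; apply: ler_sum => y _.
have := p0 y; have := r0 y.
case: ifPn => hn ry py0; last by do 2 (case: ifP => _); lra.
case: (ltP 0 (p y)) => py /=; last by lra.
move: hn; rewrite py /= negb_and -!ltNge => /orP[h|h]; rewrite h; case: ifP => _; lra.
Qed.

End Est.

Section Asym.
Context (R : realType).

Lemma ln_small (a e : R) : 0 <= a -> 0 < e ->
  exists N, forall n, (N <= n)%N -> ln (n%:R + a + 1) <= e * n%:R.
Proof.
move=> a0 e0.
pose z := 2 / e.
have z0 : 0 < z by rewrite divr_gt0.
pose B := (e * (a + 1) / 2 + ln z) * z.
exists (Num.truncn B).+1 => n hn.
have hB : B < n%:R.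
  apply: lt_le_trans (truncnS_gt B) _; by rewrite ler_nat.
have x0 : 0 < n%:R + a + 1 by have := ler0n R n; lra.
have h := @ln_le_sub1 R ((n%:R + a + 1) / z) (divr_gt0 x0 z0).
rewrite ln_div ?posrE // in h.
have ez : e * z = 2 by rewrite /z; field; exact: lt0r_neq0.
have hz : (n%:R + a + 1) / z = e * (n%:R + a + 1) / 2.
  by rewrite /z invf_div; field.
rewrite hz in h.
have : B * e < n%:R * e by rewrite ltr_pM2r.
rewrite /B -mulrA [z * e]mulrC ez.
move=> hh.
have lz : ln z <= z by have := ln_sublinear z0; lra.
nra.
Qed.

Lemma cvg_from_bound (u : nat -> \bar R) :
  (forall e, 0 < e -> exists N, forall n, (N <= n)%N ->
      (0 <= u n)%E /\ (u n <= (e * n%:R)%:E)%E) ->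
  ((fun n => ((n%:R)^-1)%:E * u n) @ \oo --> 0%E)%E.
Proof.
move=> h.
have hfin : forall e, 0 < e -> exists N, forall n, (N <= n)%N ->
    exists x, u n = x%:E /\ 0 <= x <= e * n%:R.
  move=> e e0; have [N hN] := h e e0; exists N => n /hN [h0 h1].
  case E : (u n) h0 h1 => [x||] //=.
  - by rewrite !lee_fin => h0 h1; exists x; rewrite h0 h1.
apply/fine_cvgP; split.
  have [N hN] := hfin 1 ltr01; exists N.+1 => // n /= hn.
  have [x [-> _]] := hN n (leq_trans (leqnSn N) hn).
  by rewrite -EFinM.
apply/cvgrPdist_le => e e0.
have [N hN] := hfin e e0; exists N.+1 => // n /= hn.
have [x [-> /andP[x0 xe]]] := hN n (leq_trans (leqnSn N) hn).
have n0 : (0 < n%:R :> R) by rewrite ltr0n; apply: leq_trans hn.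
rewrite -EFinM /= sub0r normrN ger0_norm; last by rewrite mulr_ge0 // invr_ge0 ltW.
by rewrite mulrC ler_pdivrMr // mulrC.
Qed.

Lemma extract_bound (v : nat -> \bar R) (e : R) : 0 < e ->
  ((fun n => ((n%:R)^-1)%:E * v n) @ \oo --> 0%E)%E ->
  exists N, forall n, (N <= n)%N -> (v n <= (e * n%:R)%:E)%E.
Proof.
move=> e0 /fine_cvgP [[N1 _ hf] /cvgrPdist_le /(_ e e0) [N2 _ hc]].
exists (maxn (maxn N1 N2) 1) => n; rewrite !geq_max => /andP[/andP[h1 h2] h3].
have f := hf n h1; have c := hc n h2; move: f c => /=.
have n0 : (0 < n%:R :> R) by rewrite ltr0n.
case: (v n) => [x||] /=.
- rewrite -EFinM /= sub0r normrN => _ hx; rewrite lee_fin.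
  have := ler_norm (n%:R^-1 * x); move=> hh.
  have : n%:R^-1 * x <= e by lra.
  by rewrite mulrC ler_pdivrMr // mulrC.
- by rewrite mulry gtr0_sg ?invr_gt0 // mul1e.
- move=> _ _; exact: leNye.
Qed.

End Asym.

Definition pr (a b : nat) : nat := ((a + b) ^ 2 + b)%N.
Definition Enc (n k i : nat) : nat := pr (pr n k) i.

Lemma pr_inj a b a' b' : pr a b = pr a' b' -> a = a' /\ b = b'.
Proof.
rewrite /pr => h.
have hs : (a + b = a' + b')%N.
  apply/eqP; rewrite eqn_leq; apply/andP; split; rewrite leqNgt; apply/negP => hlt.
  - have : ((a' + b') ^ 2 + b' < (a + b) ^ 2 + b)%N.
      apply: (@leq_trans ((a' + b').+1 ^ 2)); first by nia.
      by apply: leq_trans (leq_addr _ _); rewrite leq_exp2r.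
    by rewrite h ltnn.
  - have : ((a + b) ^ 2 + b < (a' + b') ^ 2 + b')%N.
      apply: (@leq_trans ((a + b).+1 ^ 2)); first by nia.
      by apply: leq_trans (leq_addr _ _); rewrite leq_exp2r.
    by rewrite h ltnn.
have hb : b = b' by rewrite hs in h; lia.
split; lia.
Qed.

Lemma Enc_inj n k i n' k' i' : Enc n k i = Enc n' k' i' -> [/\ n = n', k = k' & i = i'].
Proof.
rewrite /Enc => /pr_inj [/pr_inj [h1 h2] h3]; by split.
Qed.

Lemma Enc_bound n k i : ((Enc n k i).+1 * (Enc n k i).+2 <= ((n + k) ^ 2 + k + i + 2) ^ 4)%N.
Proof.
rewrite /Enc /pr.
set s := ((n + k) ^ 2 + k)%N.
have h1 : (((s + i) ^ 2 + i).+2 <= (s + i + 2) ^ 2)%N.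
  nia.
have h2 : (((s + i) ^ 2 + i).+1 * ((s + i) ^ 2 + i).+2 <= ((s + i) ^ 2 + i).+2 ^ 2)%N.
  by rewrite expnS expn1 leq_mul2r leqnSn orbT.
apply: leq_trans h2 _.
have -> : ((s + i + 2) ^ 4 = ((s + i + 2) ^ 2) ^ 2)%N by rewrite -expnM.
by rewrite leq_exp2r // addnA.
Qed.

Section V.
Context (R : realType).
Lemma vw_Enc_lb n k i (B : R) : (((n + k) ^ 2 + k + i + 2)%N%:R <= B) ->
  (B ^+ 4)^-1 <= @vw R (Enc n k i).
Proof.
move=> hB.
have B0 : 0 < B by apply: lt_le_trans hB; rewrite ltr0n addn2.
rewrite /vw lef_pV2 ?posrE ?exprn_gt0 ?ltr0n ?muln_gt0 //.
apply: le_trans (_ : (((n + k) ^ 2 + k + i + 2) ^ 4)%N%:R <= _).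
  by rewrite ler_nat Enc_bound.
rewrite natrX; apply: lerXn2r => //; rewrite ?nnegrE ?ler0n //; exact: ltW.
Qed.
End V.

Section Ar.
Context (R : realType).

Lemma pnk_arith (n kk cc : R) : 1 <= kk -> 4 * kk ^+ 2 <= n -> 1 + n / kk <= cc ->
  ((2 * kk ^+ 2)^-1 * n + 1) / (n / kk) + cc^-1 <= kk^-1.
Proof.
move=> kk1 hn hc.
have kk0 : 0 < kk by lra.
have n0 : 0 < n.
  have : 0 < kk ^+ 2 by apply: exprn_gt0.
  lra.
have t0 : 0 < n / kk by apply: divr_gt0.
have hc' : cc^-1 <= kk / n.
  rewrite -invf_div lef_pV2 ?posrE //; [lra | apply: lt_le_trans hc; lra].
have e1 : ((2 * kk ^+ 2)^-1 * n + 1) / (n / kk) = (2 * kk)^-1 + kk / n.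
  field; rewrite ?gt_eqF //.
rewrite e1.
have h2 : kk / n <= (4 * kk)^-1.
  rewrite ler_pdivrMr // mulrC ler_pdivlMr; last by lra.
  move: hn; rewrite expr2; lra.
have : (2 * kk)^-1 + (4 * kk)^-1 + (4 * kk)^-1 = kk^-1 by field; rewrite gt_eqF.
lra.
Qed.

Lemma final_arith (n kk L lX e l2 : R) : 0 < n -> 1 <= kk -> 0 <= L -> 0 <= lX ->
  l2 <= 1 -> (14 + 8 * lX) / kk <= e / 2 -> L <= e / 96 * n -> 2 <= e / 4 * n ->
  2 * (n / kk) + 4 * (2 * L + n / kk) +
  2 / kk * (l2 + 4 * (2 * L + n / kk + n * lX)) <= e * n.
Proof.
move=> n0 kk1 L0 lX0 l21 hA hL h2.
have kk0 : 0 < kk by lra.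
set ik := kk^-1.
have ik0 : 0 < ik by rewrite invr_gt0.
have ik1 : ik <= 1.
  have : ik * kk = 1 by rewrite /ik mulVf // gt_eqF.
  nra.
have hA' : (14 + 8 * lX) * ik <= e / 2 by [].
have a1 : n * ik * ik <= n * ik by rewrite ler_piMr // mulr_ge0 // ltW.
have a2 : L * ik <= L by rewrite ler_piMr.
have a3 : ik * l2 <= 1 by nra.
have a4 : n * ((14 + 8 * lX) * ik) <= n * (e / 2) by rewrite ler_wpM2l // ltW.
nra.
Qed.


Lemma idxG (a b cc M i : R) : 1 <= a -> 0 <= b -> 1 <= cc -> M <= cc * (b + 1) + 1 ->
  i + 1 <= M -> (a + b) ^+ 2 + b + i + 2 <= (a + b + 2) ^+ 2 * cc.
Proof.
move=> a1 b0 cc1 hM hi.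
have f1 : 0 <= (a + b) ^+ 2 + b + 2 by rewrite addr_ge0 // addr_ge0 // sqr_ge0.
have f2 : ((a + b) ^+ 2 + b + 2) <= ((a + b) ^+ 2 + b + 2) * cc by rewrite ler_peMr.
have f5 : (a + b) ^+ 2 + 2 * b + 3 <= (a + b + 2) ^+ 2.
  have -> : (a + b + 2) ^+ 2 = (a + b) ^+ 2 + 4 * a + 4 * b + 4 by rewrite !expr2; ring.
  lra.
have f6 : ((a + b) ^+ 2 + 2 * b + 3) * cc <= (a + b + 2) ^+ 2 * cc.
  by rewrite ler_wpM2r //; lra.
have f7 : ((a + b) ^+ 2 + b + 2) * cc + (b + 1) * cc = ((a + b) ^+ 2 + 2 * b + 3) * cc.
  by ring.
have f8 : cc * (b + 1) = (b + 1) * cc by rewrite mulrC.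
lra.
Qed.

Lemma idxB (a b cc xn M rk : R) : 1 <= a -> 0 <= b -> 1 <= cc -> 1 <= xn ->
  M <= cc * (b + 1) + 1 -> rk + 1 <= xn ->
  (a + b) ^+ 2 + b + (M + rk) + 2 <= (a + b + 2) ^+ 2 * (cc * xn).
Proof.
move=> a1 b0 cc1 xn1 hM hrk.
have P1 : 1 <= cc * xn by rewrite mulr_ege1.
have f1 : 0 <= (a + b) ^+ 2 + b + 2 by rewrite addr_ge0 // addr_ge0 // sqr_ge0.
have f2 : ((a + b) ^+ 2 + b + 2) <= ((a + b) ^+ 2 + b + 2) * (cc * xn) by rewrite ler_peMr.
have f3 : cc * (b + 1) <= (b + 1) * (cc * xn).
  rewrite mulrA [(b + 1) * cc]mulrC ler_peMr //.
  apply: mulr_ge0; lra.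
have f4 : xn <= cc * xn by rewrite ler_peMl //; lra.
have f5 : (a + b) ^+ 2 + 2 * b + 4 <= (a + b + 2) ^+ 2.
  have -> : (a + b + 2) ^+ 2 = (a + b) ^+ 2 + 4 * a + 4 * b + 4 by rewrite !expr2; ring.
  lra.
have f6 : ((a + b) ^+ 2 + 2 * b + 4) * (cc * xn) <= (a + b + 2) ^+ 2 * (cc * xn).
  by rewrite ler_wpM2r //; lra.
have f7 : ((a + b) ^+ 2 + b + 2) * (cc * xn) + (b + 1) * (cc * xn) + cc * xn =
  ((a + b) ^+ 2 + 2 * b + 4) * (cc * xn) by ring.
lra.
Qed.

Lemma ln2_le1 : ln (2 : R) <= 1.
Proof.
have h : ln (1 + 1 : R) <= 1 by apply: le_ln1Dx; lra.
by move: h; rewrite -[1 + 1]/(2%:R).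
Qed.

End Ar.

Theorem theorem2 (R : realType) (X : finType) (x0 : X)
  (C : set (probability (Xinf x0) R)) :
  C !=set0 ->
  (exists rho : probability (Xinf x0) R, forall mu, C mu -> predicts rho mu) ->
  exists (mus : nat -> probability (Xinf x0) R) (w : nat -> R),
    (forall k, C (mus k)) /\ (forall k, 0 < w k) /\
    exists nu : probability (Xinf x0) R,
      (forall A : set (Xinf x0), measurable A ->
         nu A = (\sum_(0 <= k <oo) ((w k)%:E * mus k A))%E) /\
      (forall mu, C mu -> predicts nu mu).
Proof.
move=> [mu0 Cmu0] [rho hrho].
pose Pr := probability (Xinf x0) R.
pose c (n k : nat) : R := expR (n%:R / k.+1%:R).
pose D (n k : nat) (P : Pr) (y : {ffun 'I_n -> X}) : bool :=
  (0 < @pw R X x0 P n y) && (@pw R X x0 P n y <= c n k * @pw R X x0 rho n y)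
  && (@pw R X x0 rho n y <= c n k * @pw R X x0 P n y).
pose Pnk (n k : nat) (P : Pr) : Prop :=
  C P /\ \sum_(y | ~~ D n k P y) @pw R X x0 P n y <= (k.+1%:R)^-1.
have hg : forall nk : nat * nat, exists mf : nat * (nat -> Pr),
  (forall i, (i < mf.1)%N -> Pnk nk.1 nk.2 (mf.2 i)) /\
  mf.1%:R <= c nk.1 nk.2 / (nk.2.+1%:R)^-1 + 1 /\
  forall a, Pnk nk.1 nk.2 a ->
    \sum_(y | D nk.1 nk.2 a y && ~~ @cov _ _ (D nk.1 nk.2) mf.2 mf.1 y) @pw R X x0 a nk.1 y
      < (nk.2.+1%:R)^-1.
  move=> [n k] /=.
  have [|||||m [f H]] := @greedy R {ffun 'I_n -> X} Pr mu0 (@pw R X x0 rho n) (Pnk n k)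
     (D n k) (fun P => @pw R X x0 P n) (c n k) (k.+1%:R)^-1.
  - exact: pw_ge0.
  - by rewrite pw_sum.
  - by rewrite invr_gt0 ltr0n.
  - exact: expR_gt0.
  - by move=> a y _ /andP[/andP[_ h] _].
  by exists (m, f).
have [MF hMF] := choice hg.
pose M n k := (MF (n, k)).1.
pose F n k := (MF (n, k)).2.
have hc : forall n : nat, exists g : nat -> Pr, (forall j, C (g j)) /\
    forall (y : {ffun 'I_n -> X}) P, C P ->
      @pw R X x0 P n y <= 2 * @pw R X x0 (g (enum_rank y)) n y.
  move=> n.
  have [g hg'] := @crude R {ffun 'I_n -> X} Pr C (fun P => @pw R X x0 P n) mu0 Cmu0
    (fun a y => introT andP (conj (@pw_ge0 R X x0 a n y) (@pw_le1 R X x0 a n y))).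
  exists (fun j => g (nth [ffun=> x0] (enum {ffun 'I_n -> X}) j)); split.
    by move=> j; case: (hg' (nth [ffun=> x0] (enum {ffun 'I_n -> X}) j)).
  by move=> y P CP; rewrite nth_enum_rank; case: (hg' y) => _; apply.
have [Gc hGc] := choice hc.
pose comp n k i := if (i < M n k)%N then F n k i else Gc n (i - M n k)%N.
have Ccomp : forall n k i, C (comp n k i).
  move=> n k i; rewrite /comp; case: ifP => h.
    by have [h1 _] := hMF (n, k); have [] := h1 _ h.
  by have [] := hGc n.
have hmus : forall j, exists P : Pr, C P /\ forall n k i, Enc n k i = j -> P = comp n k i.
  move=> j; case: (pselect (exists nki : nat * nat * nat, Enc nki.1.1 nki.1.2 nki.2 = j)).
    move=> [[[n k] i] /= hE]; exists (comp n k i); split => // n' k' i' hE'.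
    by have [-> -> ->] := @Enc_inj _ _ _ _ _ _ (etrans hE' (esym hE)).
  move=> hn; exists mu0; split => // n k i hE; exfalso; apply: hn; by exists (n, k, i).
have [mus hmus'] := choice hmus.
have musE : forall n k i, mus (Enc n k i) = comp n k i.
  by move=> n k i; have [_ h] := hmus' (Enc n k i); apply: h.
have [w [nu [hw hnu]]] := @mixture R X x0 mus.
have w0 : forall k, 0 < w k by move=> k; exact: lt_le_trans (vw_gt0 _ k) (hw k).
exists mus, w; split; first by move=> j; have [] := hmus' j.
split => //; exists nu; split => //.
move=> mu Cmu; apply: cvg_from_bound => e e0.
pose lX := ln (#|X|%:R : R).
have X1 : (0 < #|X|)%N by apply/card_gt0P; exists x0.
have lX0 : 0 <= lX by apply: ln_ge0; rewrite ler1n.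
pose Ac := 14 + 8 * lX.
have Ac0 : 0 < Ac by rewrite /Ac; lra.
pose k := Num.truncn (2 * Ac / e).
pose kk : R := k.+1%:R.
have kk1 : 1 <= kk by rewrite /kk ler1n.
have kk0 : 0 < kk by lra.
have hk : Ac / kk <= e / 2.
  have h := truncnS_gt (2 * Ac / e); rewrite -/k -/kk in h.
  rewrite ler_pdivrMr // -ler_pdivrMl; last by lra.
  have -> : (e / 2)^-1 * Ac = 2 * Ac / e by field; rewrite gt_eqF.
  exact: ltW.
pose eps := (2 * kk ^+ 2)^-1.
have eps0 : 0 < eps by rewrite invr_gt0 mulr_gt0 // exprn_gt0.
have [N1 hN1] := @extract_bound R _ eps eps0 (hrho mu Cmu).
have e96 : 0 < e / 96 by rewrite divr_gt0 // ltr0n.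
have [N3 hN3] := @ln_small R k.+1%:R (e / 96) (ler0n _ _) e96.
pose N4 := (Num.truncn (8 / e)).+1.
pose N2 := (4 * k.+1 ^ 2)%N.
exists (maxn (maxn N1 N2) (maxn N3 (maxn N4 1))) => n.
rewrite !geq_max => /andP[/andP[hn1 hn2] /andP[hn3 /andP[hn4 hn5]]].
split.
  rewrite /kl_div; apply: (@gibbs R _ (fun y => @pw R X x0 mu n y) (fun y => @pw R X x0 nu n y)).
  - by move=> y; exact: pw_ge0.
  - by move=> y; exact: pw_ge0.
  - by rewrite !pw_sum.
have n1 : (0 < n)%N := hn5.
have nR : 0 < (n%:R : R) by rewrite ltr0n.
pose tt := n%:R / kk.
have tt0 : 0 < tt by rewrite divr_gt0.
pose cc := c n k.
have ccE : cc = expR tt by [].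
have cc1 : 1 + tt <= cc by rewrite ccE expR_ge1Dx.
have cc1' : 1 <= cc by lra.
have lncc : ln cc = tt by rewrite ccE expRK.
pose p := fun y : {ffun 'I_n -> X} => @pw R X x0 mu n y.
pose q := fun y : {ffun 'I_n -> X} => @pw R X x0 nu n y.
pose r := fun y : {ffun 'I_n -> X} => @pw R X x0 rho n y.
have p0 : forall y, 0 <= p y by move=> y; exact: pw_ge0.
have r0 : forall y, 0 <= r y by move=> y; exact: pw_ge0.
have Pmu : Pnk n k mu.
  split => //.
  have hb := @bad_mass R _ p r cc (eps * n%:R) p0 r0 _ _ (hN1 n hn1).
  apply: le_trans (hb _ _) _.
  - by rewrite /r pw_sum.
  - lra.
  rewrite lncc; apply: pnk_arith => //.
  by move: hn2; rewrite -(ler_nat R) /N2 natrM natrX.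
have [hP [hm hcov]] := hMF (n, k).
have hcov' := hcov mu Pmu; simpl in hcov'.
have hm' : (M n k)%:R <= cc * kk + 1 by move: hm; rewrite /= invrK.
pose B : R := (n%:R + k%:R + 2) ^+ 2 * cc.
pose xn : R := (#|X|%:R) ^+ n.
pose B' := B * xn.
have xn1 : 1 <= xn by rewrite exprn_ege1 // ler1n.
have nk1 : 1 <= (n%:R + k%:R + 2 : R) by have := ler0n R n; have := ler0n R k; lra.
have B1 : 1 <= B by rewrite /B mulr_ege1 // exprn_ege1.
have B'1 : 1 <= B' by rewrite /B' mulr_ege1.
have B0 : 0 < B := lt_le_trans ltr01 B1.
have B'0 : 0 < B' := lt_le_trans ltr01 B'1.
have cc0 : 0 <= cc := ltW (lt_le_trans ltr01 cc1').
pose G := fun y => D n k mu y && @cov _ _ (D n k) (F n k) (M n k) y.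
have w0' : forall j, 0 <= w j by move=> j; exact: ltW.
have kkE : kk = k%:R + 1 by rewrite /kk -natr1.
have hm'' : (M n k)%:R <= cc * (k%:R + 1) + 1 by rewrite -kkE.
have a1 : (1 : R) <= n%:R by rewrite ler1n.
have hkl : (kl_div mu nu n <= (ln (cc ^+ 2 * B ^+ 4) + (2 * kk^-1) * ln (2 * B' ^+ 4))%:E)%E.
  apply: (@est R _ p q G (cc ^+ 2 * B ^+ 4) (2 * B' ^+ 4) (2 * kk^-1)).
  - exact: p0.
  - by rewrite /p pw_sum.
  - by rewrite mulr_ege1 // exprn_ege1.
  - by rewrite mulr_ege1 ?exprn_ege1 // ler1n.
  - rewrite (bigID (D n k mu)) /=.
    have -> : \sum_(i | ~~ G i && D n k mu i) p i =
              \sum_(i | D n k mu i && ~~ @cov _ _ (D n k) (F n k) (M n k) i) p i.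
      by apply: eq_bigl => y; rewrite /G; case: (D n k mu y); case: (cov _ _ _ _).
    have -> : \sum_(i | ~~ G i && ~~ D n k mu i) p i = \sum_(i | ~~ D n k mu i) p i.
      by apply: eq_bigl => y; rewrite /G; case: (D n k mu y); rewrite /= ?andbF.
    have h1 : \sum_(i | ~~ D n k mu i) p i <= kk^-1 := Pmu.2.
    have h2 : \sum_(i | D n k mu i && ~~ @cov _ _ (D n k) (F n k) (M n k) i) p i <= kk^-1
      := ltW hcov'.
    apply: le_trans (lerD h2 h1) _; by rewrite mulr_natl mulr2n.
  - move=> y py.
    pose rk := (enum_rank y : nat).
    pose i' := (M n k + rk)%N.
    have mj' : mus (Enc n k i') = Gc n rk.
      by rewrite musE /comp /i' ltnNge leq_addr /= addKn.
    have hg2 : p y <= 2 * @pw R X x0 (Gc n rk) n y := (hGc n).2 y mu Cmu.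
    have hq' := @mix_ge R X x0 nu w mus w0' hnu (Enc n k i') n y.
    rewrite mj' in hq'.
    have hrk : (rk%:R + 1 : R) <= xn.
      have h : (rk.+1 <= #|X| ^ n)%N.
        have e1 : #|{ffun 'I_n -> X}| = (#|X| ^ n)%N by rewrite card_ffun card_ord.
        have h0 : (rk < #|{ffun 'I_n -> X}|)%N := ltn_ord (enum_rank y).
        by rewrite -e1.
      by rewrite /xn -natrX natr1 ler_nat.
    have hvj' : (B' ^+ 4)^-1 <= vw R (Enc n k i').
      apply: vw_Enc_lb.
      rewrite /i' !natrD natrX natrD.
      have -> : B' = (n%:R + k%:R + 2) ^+ 2 * (cc * xn) by rewrite /B' /B mulrA.
      exact: idxB.
    have hGc0 : 0 < @pw R X x0 (Gc n rk) n y.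
      by have := lt_le_trans py hg2; rewrite pmulr_rgt0.
    have B4 : 0 < B' ^+ 4 by rewrite exprn_gt0.
    have hwj : (B' ^+ 4)^-1 <= w (Enc n k i') := le_trans hvj' (hw _).
    have hq2 : (B' ^+ 4)^-1 * @pw R X x0 (Gc n rk) n y <= q y.
      apply: le_trans hq'; apply: ler_wpM2r => //; exact: ltW.
    have hqpos : 0 < q y.
      apply: lt_le_trans hq2; apply: mulr_gt0 => //; by rewrite invr_gt0.
    split => //.
    have hpF : forall (P : Pr) (V : R), 0 < V -> V^-1 * @pw R X x0 P n y <= q y ->
        @pw R X x0 P n y <= V * q y.
      move=> P V V0 h; rewrite -ler_pdivrMl // mulrC; by rewrite mulrC.
    case: ifPn => Gy; last first.
      have h := hpF _ _ B4 hq2.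
      apply: (le_trans hg2); rewrite -mulrA; apply: ler_wpM2l => //; exact: ler0n.
    move: Gy; rewrite /G => /andP[Dy covy].
    move/hasP: covy => [i]; rewrite mem_iota add0n => /andP[_ iM] hDi.
    have mj : mus (Enc n k i) = F n k i by rewrite musE /comp iM.
    have hq := @mix_ge R X x0 nu w mus w0' hnu (Enc n k i) n y.
    rewrite mj in hq.
    move: Dy => /andP[/andP[_ hp] _].
    move: hDi => /andP[_ hr].
    have hvj : (B ^+ 4)^-1 <= vw R (Enc n k i).
      apply: vw_Enc_lb.
      rewrite !natrD natrX natrD.
      have hi : (i%:R : R) + 1 <= (M n k)%:R by rewrite natr1 ler_nat.
      rewrite /B; exact: (@idxG R _ _ _ _ _ a1 (ler0n _ _) cc1' hm'' hi).
    have B40 : 0 < B ^+ 4 by rewrite exprn_gt0.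
    have hwj2 : (B ^+ 4)^-1 <= w (Enc n k i) := le_trans hvj (hw _).
    have hF0 : 0 <= @pw R X x0 (F n k i) n y by exact: pw_ge0.
    have hq3 : (B ^+ 4)^-1 * @pw R X x0 (F n k i) n y <= q y.
      apply: le_trans hq; exact: ler_wpM2r.
    have h := hpF _ _ B40 hq3.
    have hc2 : p y <= cc * (cc * @pw R X x0 (F n k i) n y).
      apply: le_trans hp _; apply: ler_wpM2l; [exact: cc0 | exact: hr].
    apply: (le_trans hc2).
    have e3 : cc ^+ 2 * B ^+ 4 * q y = cc * (cc * (B ^+ 4 * q y)).
      by rewrite [cc ^+ 2]expr2 -!mulrA.
    rewrite e3; apply: ler_wpM2l; first exact: cc0.
    by apply: ler_wpM2l; first exact: cc0.
apply: le_trans hkl _; rewrite lee_fin.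
pose L := ln (n%:R + k%:R + 2 : R).
have hL0 : 0 <= L by apply: ln_ge0.
have nk0 : 0 < (n%:R + k%:R + 2 : R) := lt_le_trans ltr01 nk1.
have cc0' : 0 < cc := lt_le_trans ltr01 cc1'.
have lnB : ln B = 2 * L + tt.
  by rewrite /B lnM ?posrE ?exprn_gt0 // lnXn // lncc mulr_natl.
have lnMG : ln (cc ^+ 2 * B ^+ 4) = 2 * tt + 4 * (2 * L + tt).
  by rewrite lnM ?posrE ?exprn_gt0 // !lnXn // lncc lnB !mulr_natl.
have X0 : (0 : R) < #|X|%:R by rewrite ltr0n.
have lnxn : ln xn = n%:R * lX by rewrite /xn lnXn // mulr_natl.
have lnMB : ln (2 * B' ^+ 4) = ln 2 + 4 * (2 * L + tt + n%:R * lX).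
  rewrite lnM ?posrE ?exprn_gt0 ?ltr0n // lnXn // /B' lnM ?posrE ?exprn_gt0 //.
  - by rewrite lnB lnxn [4 * _]mulr_natl.
rewrite lnMG lnMB.
have l2 : ln (2 : R) <= 1 := @ln2_le1 R.
have hLn : L <= e / 96 * n%:R.
  have h := hN3 n hn3.
  have e1 : (n%:R + k.+1%:R + 1 : R) = n%:R + k%:R + 2 by rewrite -natr1; ring.
  by rewrite /L -e1.
have h2 : 2 <= e / 4 * n%:R.
  have h := truncnS_gt (8 / e).
  have h' : (N4%:R : R) <= n%:R by rewrite ler_nat.
  have h'' : 8 / e < n%:R := lt_le_trans h h'.
  move: h''; rewrite ltr_pdivrMr // => h3.
  have -> : e / 4 * n%:R = (n%:R * e) / 4 by rewrite mulrC mulrA.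
  rewrite ler_pdivlMr; last by rewrite ltr0n.
  apply: ltW; apply: le_lt_trans h3; by rewrite -natrM.
exact: (@final_arith R n%:R kk L lX e (ln 2) nR kk1 hL0 lX0 l2 hk hLn h2).
Qed.
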